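(* Let $X$ be a proper subset of $\{\mathrm{CONV},\mathrm{CA},\mathrm{REF},\mathrm{IAP}\}$ with $\mathrm{IAP}\in X$. Then there exists an infinite biosphere $(G,t)$ such that $\bigcap X$ (the set of $G$-subsets lying in every member of $X$, computed in $G$) is not upward generic.
   Context: An infinite biosphere is a directed graph $G$ together with a function $t$ assigning a real number $t(v)$ to each vertex, such that: (1) if $v$ is a parent of $w$ (edge from $v$ to $w$) then $t(v)<t(w)$; (2) for every $r\in\mathbb R$ at most finitely many vertices $v$ have $t(v)<r$; (3) every vertex has finitely many children; (4) $G$ is infinite. $v$ is an ancestor of $w$ (and $w$ a descendant of $v$) if there is a directed path $v=v_1,\dots,v_n=w$ with $n>1$. A $G$-subset is a set of vertices. $\mathrm{IAP}$: $G$-subsets $S$ such that no $v\in S$ has both infinitely many descendants in $S$ and infinitely many non-descendants in $S$. $\mathrm{CONV}$: $G$-subsets $S$ such that every $v\in G$ having an ancestor in $S$ and a descendant in $S$ lies in $S$. $\mathrm{CA}$: $G$-subsets $S$ for which there exists $v\in S$ such that every $w\in S$ with $w\neq v$ is a descendant of $v$. $\mathrm{REF}$: $G$-subsets $S$ such that every $v\in S$ with infinitely many descendants in $G$ has infinitely many descendants in $S$. For a nonempty linear order $(Y,<)$, an ascending chain of $G$-subsets indexed by $Y$ is a family $\{C_\alpha\}_{\alpha\in Y}$ with $C_\alpha\subseteq C_\beta$ whenever $\alpha<\beta$. A set $T$ of $G$-subsets is upward generic if for every ascending chain $\{C_\alpha\}_{\alpha\in Y}$ of nonempty $G$-subsets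 with each $C_\alpha\in T$, $\bigcup_\alpha C_\alpha\in T$. *)

(* Defs.v *)
From Stdlib Require Import Reals List Relations.
Open Scope R_scope.

Definition finite_pred {V : Type} (P : V -> Prop) : Prop :=
  exists l : list V, forall v, P v -> In v l.

(* A directed graph on vertex type V with edge relation E (E v w : v is a
   parent of w), together with t : V -> R. *)
Record biosphere (V : Type) (E : V -> V -> Prop) (t : V -> R) : Prop := {
  bio_edge : forall v w, E v w -> t v < t w;
  bio_below : forall r : R, finite_pred (fun v => t v < r);
  bio_children : forall v, finite_pred (fun w => E v w);
  bio_infinite : ~ finite_pred (fun _ : V => True)
}.

Definition descendant {V : Type} (E : V -> V -> Prop) (v w : V) : Prop :=
  clos_trans V E v w.

Definition Gsubset (V : Type) := V -> Prop.

Definition IAP {V} (E : V -> V -> Prop) (S : Gsubset V) : Prop :=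
  forall v, S v ->
    ~ ( ~ finite_pred (fun w => S w /\ descendant E v w)
      /\ ~ finite_pred (fun w => S w /\ ~ descendant E v w)).

Definition CONV {V} (E : V -> V -> Prop) (S : Gsubset V) : Prop :=
  forall v, (exists a, S a /\ descendant E a v) ->
            (exists d, S d /\ descendant E v d) -> S v.

Definition CA {V} (E : V -> V -> Prop) (S : Gsubset V) : Prop :=
  exists v, S v /\ forall w, S w -> w <> v -> descendant E v w.

Definition REF {V} (E : V -> V -> Prop) (S : Gsubset V) : Prop :=
  forall v, S v -> ~ finite_pred (fun w => descendant E v w) ->
    ~ finite_pred (fun w => S w /\ descendant E v w).

Inductive prop_name : Type := pCONV | pCA | pREF | pIAP.

Definition holds {V} (E : V -> V -> Prop) (p : prop_name) (S : Gsubset V) : Prop :=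
  match p with
  | pCONV => CONV E S
  | pCA => CA E S
  | pREF => REF E S
  | pIAP => IAP E S
  end.

Definition strict_linear_order (Y : Type) (lt : Y -> Y -> Prop) : Prop :=
  (forall a, ~ lt a a) /\
  (forall a b c, lt a b -> lt b c -> lt a c) /\
  (forall a b, lt a b \/ a = b \/ lt b a).

Definition upward_generic {V : Type} (T : Gsubset V -> Prop) : Prop :=
  forall (Y : Type) (lt : Y -> Y -> Prop) (C : Y -> Gsubset V),
    strict_linear_order Y lt -> inhabited Y ->
    (forall a b, lt a b -> forall v, C a v -> C b v) ->
    (forall a, exists v, C a v) ->
    (forall a, T (C a)) ->
    T (fun v => exists a, C a v).

(* Main.v *)
Require Import Defs.
From Stdlib Require Import Reals List Relations Lia Lra.
From Stdlib Require Import FunctionalExtensionality PropExtensionality.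

Inductive Vx : Type := vR | vA (n : nat) | vC (n : nat) | vB (n : nat).

Inductive Ex : Vx -> Vx -> Prop :=
| eRA : Ex vR (vA 0) | eRC : Ex vR (vC 0)
| eAA n : Ex (vA n) (vA (S n)) | eCC n : Ex (vC n) (vC (S n))
| eCB n : Ex (vC n) (vB n).

Definition D (v w : Vx) : Prop :=
  match v, w with
  | vR, vR => False | vR, _ => True
  | vA j, vA k => (j < k)%nat | vA _, _ => False
  | vC j, vC k => (j < k)%nat | vC j, vB k => (j <= k)%nat | vC _, _ => False
  | vB _, _ => False
  end.

Definition tx (v : Vx) : R :=
  match v with vR => 0 | vA n => INR n + 1 | vC n => INR n + 1 | vB n => INR n + 2 end.

Definition idx (v : Vx) : nat :=
  match v with vR => 0 | vA n => n | vC n => n | vB n => n end.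

Lemma D_trans x y z : D x y -> D y z -> D x z.
Proof. destruct x, y, z; simpl; try tauto; lia. Qed.

Lemma pathA j d : clos_trans Vx Ex (vA j) (vA (j + S d)).
Proof.
  induction d.
  - replace (j + 1)%nat with (S j) by lia. apply t_step. constructor.
  - eapply t_trans; [exact IHd|]. replace (j + S (S d))%nat with (S (j + S d)) by lia.
    apply t_step; constructor.
Qed.

Lemma pathC j d : clos_trans Vx Ex (vC j) (vC (j + S d)).
Proof.
  induction d.
  - replace (j + 1)%nat with (S j) by lia. apply t_step. constructor.
  - eapply t_trans; [exact IHd|]. replace (j + S (S d))%nat with (S (j + S d)) by lia.
    apply t_step; constructor.
Qed.

Lemma pathA' j k : (j < k)%nat -> clos_trans Vx Ex (vA j) (vA k).
Proof. intros H. replace k with (j + S (k - j - 1))%nat by lia. apply pathA. Qed.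
Lemma pathC' j k : (j < k)%nat -> clos_trans Vx Ex (vC j) (vC k).
Proof. intros H. replace k with (j + S (k - j - 1))%nat by lia. apply pathC. Qed.
Lemma pathCB j k : (j <= k)%nat -> clos_trans Vx Ex (vC j) (vB k).
Proof.
  intros H. destruct (Nat.eq_dec j k).
  - subst. apply t_step; constructor.
  - eapply t_trans; [apply (pathC' j k); lia|]. apply t_step; constructor.
Qed.

Lemma desc_iff v w : descendant Ex v w <-> D v w.
Proof.
  split.
  - unfold descendant. induction 1.
    + destruct H; simpl; lia || tauto.
    + eapply D_trans; eauto.
  - unfold descendant. destruct v, w; simpl; try tauto; intros H.
    + destruct n. apply t_step; exact eRA.
      eapply t_trans; [apply t_step; exact eRA|]. apply pathA'; lia.
    + destruct n. apply t_step; exact eRC.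
      eapply t_trans; [apply t_step; exact eRC|]. apply pathC'; lia.
    + eapply t_trans; [apply t_step; exact eRC|]. apply pathCB; lia.
    + apply pathA'; auto.
    + apply pathC'; auto.
    + apply pathCB; auto.
Qed.

Lemma desc_eq : descendant Ex = D.
Proof.
  apply functional_extensionality; intro v; apply functional_extensionality; intro w.
  apply propositional_extensionality; apply desc_iff.
Qed.

Definition gen (N : nat) : list Vx :=
  vR :: map vA (seq 0 N) ++ map vC (seq 0 N) ++ map vB (seq 0 N).

Lemma gen_in N v : (idx v < N)%nat -> In v (gen N).
Proof.
  intros H. unfold gen. destruct v; simpl in *; [now left|..]; right;
  repeat rewrite in_app_iff.
  - left. apply in_map. apply in_seq. lia.
  - right; left. apply in_map. apply in_seq. lia.
  - right; right. apply in_map. apply in_seq. lia.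
Qed.

Lemma inf_lemma (f : nat -> Vx) (P : Vx -> Prop) m :
  (forall n, idx (f n) = n) -> (forall n, (m <= n)%nat -> P (f n)) -> ~ finite_pred P.
Proof.
  intros Hf HP [l Hl].
  assert (exists N, forall n, (N <= n)%nat -> ~ In (f n) l) as [N HN].
  { clear HP Hl. induction l as [|a l IH].
    - exists 0%nat. simpl. tauto.
    - destruct IH as [N HN]. exists (Nat.max N (S (idx a))). intros n Hn [Ha|Ha].
      + subst. rewrite Hf in Hn. lia.
      + apply (HN n); [lia|auto]. }
  apply (HN (Nat.max N m)); [lia|]. apply Hl, HP. lia.
Qed.

Lemma bio : biosphere Vx Ex tx.
Proof.
  constructor.
  - intros v w H; destruct H; unfold tx; rewrite ?S_INR; simpl; try (pose proof (pos_INR n)); lra.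
  - intros r. destruct (archimed r) as [Hr _].
    exists (gen (Z.to_nat (up r))). intros v Hv.
    destruct v; [now left|..]; apply gen_in; simpl in *;
    assert (INR n < IZR (up r)) as H by lra;
    rewrite INR_IZR_INZ in H; apply lt_IZR in H; lia.
  - intros v. destruct v.
    + exists (vA 0 :: vC 0 :: nil). intros w H; inversion H; simpl; tauto.
    + exists (vA (S n) :: nil). intros w H; inversion H; simpl; tauto.
    + exists (vC (S n) :: vB n :: nil). intros w H; inversion H; simpl; tauto.
    + exists nil. intros w H; inversion H.
  - apply (inf_lemma vA _ 0); auto.
Qed.

Definition chainREF (n : nat) (v : Vx) : Prop :=
  v = vR \/ exists k, (k <= n)%nat /\ (v = vA k \/ v = vC k).
Definition chainCA (n : nat) (v : Vx) : Prop :=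
  (exists k, v = vA k) \/ (exists k, (k <= n)%nat /\ v = vB k).
Definition chainCONV (n : nat) (v : Vx) : Prop :=
  v = vR \/ (exists k, v = vA k) \/ (exists k, (k <= n)%nat /\ v = vB k).

Lemma slo : strict_linear_order nat lt.
Proof. split; [|split]; intros; lia. Qed.


Lemma nil_fin (k : nat) : finite_pred (fun w => D (vB k) w).
Proof. exists nil. intros w Hw. destruct w; simpl in Hw; contradiction. Qed.

Lemma CONV_props n : CA Ex (chainCONV n) /\ REF Ex (chainCONV n) /\ IAP Ex (chainCONV n).
Proof.
  unfold CA, REF, IAP; rewrite ?desc_eq. split; [|split].
  - exists vR. split; [left; auto|]. intros w _ Hw. destruct w; simpl; auto.
  - intros v Hv Hinf. destruct Hv as [->|[[j ->]|[k [_ ->]]]].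
    + apply (inf_lemma vA _ 0); auto. intros m _. split; [right; left; eauto|exact I].
    + apply (inf_lemma vA _ (S j)); auto. intros m Hm. split; [right; left; eauto|simpl; lia].
    + exfalso. apply Hinf, nil_fin.
  - intros v Hv [H1 H2].
    destruct Hv as [->|[[j ->]|[k [_ ->]]]].
    + apply H2. exists (vR :: nil). intros w [Hw Hd]. destruct w; simpl in *; tauto.
    + apply H2. exists (gen (S (j + n))). intros w [Hw Hd]. apply gen_in.
      destruct Hw as [->|[[k ->]|[k [Hk ->]]]]; simpl in *; lia.
    + apply H1. exists nil. intros w [_ Hw]. destruct w; simpl in Hw; contradiction.
Qed.

Lemma CA_props n : CONV Ex (chainCA n) /\ REF Ex (chainCA n) /\ IAP Ex (chainCA n).
Proof.
  unfold CONV, REF, IAP; rewrite ?desc_eq. split; [|split].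
  - intros v [a [Ha Hav]] _. destruct Ha as [[j ->]|[k [_ ->]]].
    + destruct v; simpl in Hav; try contradiction. left; eauto.
    + simpl in Hav; contradiction.
  - intros v Hv Hinf. destruct Hv as [[j ->]|[k [_ ->]]].
    + apply (inf_lemma vA _ (S j)); auto. intros m Hm. split; [left; eauto|simpl; lia].
    + exfalso. apply Hinf, nil_fin.
  - intros v Hv [H1 H2].
    destruct Hv as [[j ->]|[k [_ ->]]].
    + apply H2. exists (gen (S (j + n))). intros w [Hw Hd]. apply gen_in.
      destruct Hw as [[k ->]|[k [Hk ->]]]; simpl in *; lia.
    + apply H1. exists nil. intros w [_ Hw]. destruct w; simpl in Hw; contradiction.
Qed.

Lemma REF_props n : CONV Ex (chainREF n) /\ CA Ex (chainREF n) /\ IAP Ex (chainREF n).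
Proof.
  unfold CONV, CA, IAP; rewrite ?desc_eq. split; [|split].
  - intros v _ [d [Hd Hvd]]. unfold chainREF in *.
    destruct Hd as [->|[k [Hk [->| ->]]]]; destruct v; simpl in Hvd; try contradiction;
      auto; right; exists n0; split; auto; lia.
  - exists vR. split; [left; auto|]. intros w _ Hw. destruct w; simpl; auto.
  - intros v Hv [H1 H2]. apply H1. exists (gen (S n)). intros w [Hw _]. apply gen_in.
    destruct Hw as [->|[k [Hk [->| ->]]]]; simpl; lia.
Qed.

Theorem mainTheorem7 :
  forall X : prop_name -> Prop,
    X pIAP -> (exists p, ~ X p) ->
    exists (V : Type) (E : V -> V -> Prop) (t : V -> R),
      biosphere V E t /\
      ~ upward_generic (fun S : Gsubset V => forall p, X p -> holds E p S).
Proof.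
  intros X HI [p0 Hp0].
  exists Vx, Ex, tx. split; [exact bio|]. intros HU.
  destruct p0; [ | | | contradiction].
  -
    assert (H := HU nat lt chainCONV slo (inhabits 0%nat)
      ltac:(intros a b Hab v Hv; unfold chainCONV in *;
            destruct Hv as [?|[?|[k [? ?]]]]; eauto; right; right; exists k; split; auto; lia)
      ltac:(intros a; exists vR; left; auto)
      ltac:(intros n p Xp; destruct (CONV_props n) as [? [? ?]]; destruct p; simpl; tauto)
      pIAP HI).
    simpl in H. unfold IAP in H. rewrite desc_eq in H.
    apply (H (vA 0) (ex_intro _ 0%nat (or_intror (or_introl (ex_intro _ 0%nat eq_refl))))).
    split.
    + apply (inf_lemma vA _ 1); auto. intros m Hm. split; [exists 0%nat; right; left; eauto|simpl; lia].
    + apply (inf_lemma vB _ 0); auto. intros m Hm. split; [exists m; right; right; eauto|simpl; auto].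
  -
    assert (H := HU nat lt chainCA slo (inhabits 0%nat)
      ltac:(intros a b Hab v Hv; unfold chainCA in *;
            destruct Hv as [?|[k [? ?]]]; eauto; right; exists k; split; auto; lia)
      ltac:(intros a; exists (vA 0); left; eauto)
      ltac:(intros n p Xp; destruct (CA_props n) as [? [? ?]]; destruct p; simpl; tauto)
      pIAP HI).
    simpl in H. unfold IAP in H. rewrite desc_eq in H.
    apply (H (vA 0) (ex_intro _ 0%nat (or_introl (ex_intro _ 0%nat eq_refl)))).
    split.
    + apply (inf_lemma vA _ 1); auto. intros m Hm. split; [exists 0%nat; left; eauto|simpl; lia].
    + apply (inf_lemma vB _ 0); auto. intros m Hm. split; [exists m; right; eauto|simpl; auto].
  -
    assert (H := HU nat lt chainREF slo (inhabits 0%nat)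
      ltac:(intros a b Hab v Hv; unfold chainREF in *;
            destruct Hv as [?|[k [? ?]]]; eauto; right; exists k; split; auto; lia)
      ltac:(intros a; exists vR; left; auto)
      ltac:(intros n p Xp; destruct (REF_props n) as [? [? ?]]; destruct p; simpl; tauto)
      pIAP HI).
    simpl in H. unfold IAP in H. rewrite desc_eq in H.
    apply (H (vA 0) (ex_intro _ 0%nat (or_intror (ex_intro _ 0%nat (conj (le_n 0) (or_introl eq_refl)))))).
    split.
    + apply (inf_lemma vA _ 1); auto. intros m Hm. split; [exists m; right; exists m; auto|simpl; lia].
    + apply (inf_lemma vC _ 0); auto. intros m Hm. split; [exists m; right; exists m; auto|simpl; auto].
Qed.
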